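(* Let $k\ge2$ and $n\ge3$, and write $q=q_{n,k}$, $r=r_{n,k}$ and $N=N_{n,k}=\lfloor(k-1)(n-1)/k\rfloor$. Write $\mathcal{F}_{n,k}(x)=x^{r}P_{n,k}(x^k)$ with $P_{n,k}(\xi)\in\mathbb{Z}[\xi]$. Then $P_{n,k}$ is monic of degree $N$. Let $\xi_1,\dots,\xi_N$ be its roots counted with multiplicity, and let $\sigma_h$ denote their $h$-th elementary symmetric polynomial. Then $$\sigma_h(\xi_1,\dots,\xi_N)=(-1)^hC_k(n-h-1,h)\quad(h=1,\dots,N),$$ $$\sum_{j=1}^N\xi_j=-(n-2),\qquad\prod_{j=1}^N\xi_j=(-1)^N\binom{q+r}{r}.$$
   Context: For $k\ge2$ and $n\ge1$, the polynomials $\mathcal{F}_{n,k}(x)$ are defined by $\mathcal{F}_{1,k}=1$, $\mathcal{F}_{n,k}=0$ for $n=0,-1,\dots,-(k-2)$, and $\mathcal{F}_{n,k}(x)=x^{k-1}\mathcal{F}_{n-1,k}+\dots+\mathcal{F}_{n-k,k}$ for $n\ge2$. For $n>0$: $q_{n,k}=\lfloor(n-2)/k\rfloor$, and $r_{n,k}\in\{0,\dots,k-1\}$ is the residue of $(k-1)(n-1)$ modulo $k$. For integers $m\ge0$ and $j\ge0$, $C_k(m,j)$ is the coefficient of $x^j$ in $(1+x+\dots+x^{k-1})^m$. It is known (Hoggatt–Bicknell) that $\mathcal{F}_{n,k}(x)=\sum_{h\ge0}C_k(n-h-1,h)\,x^{(k-1)(n-1)-hk}$ for $n\ge1$. *)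

(* Defs.v *)
From HB Require Import structures.
From mathcomp Require Import all_boot all_order all_algebra all_field.
Set Implicit Arguments. Unset Strict Implicit. Unset Printing Implicit Defensive.
Import Order.TTheory GRing.Theory Num.Theory.
Local Open Scope ring_scope.

(* A window [w] = [:: F_m; F_(m-1); ...;
   F_(m-k+1)] is mapped to [:: F_(m+1); F_m; ...; F_(m-k+2)], where
   F_(m+1) = x^(k-1) F_m + x^(k-2) F_(m-1) + ... + x^0 F_(m+1-k). *)
Definition kfib_step (k : nat) (w : seq {poly int}) : seq {poly int} :=
  (\sum_(j < k) 'X^(k - 1 - j) * nth 0 w j) :: take (k - 1) w.

(* kfib_win k m = [:: F_(m+1); F_m; ...; F_(m+2-k)] *)
Fixpoint kfib_win (k m : nat) : seq {poly int} :=
  match m with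
  | 0 => 1 :: nseq (k - 1) 0   (* F_1 = 1, F_0 = ... = F_(-(k-2)) = 0 *)
  | m'.+1 => kfib_step k (kfib_win k m')
  end.

(* The polynomial \mathcal{F}_{n,k}(x) (meaningful for n >= 1). *)
Definition kfib (n k : nat) : {poly int} := head 0 (kfib_win k n.-1).

Definition qnk (n k : nat) : nat := ((n - 2) %/ k)%N.
Definition rnk (n k : nat) : nat := (((k - 1) * (n - 1)) %% k)%N.
Definition Nnk (n k : nat) : nat := (((k - 1) * (n - 1)) %/ k)%N.

Definition Ck (k m j : nat) : int := ((\sum_(i < k) 'X^i : {poly int}) ^+ m)`_j.

Definition esym_seq (R : comRingType) (s : seq R) (h : nat) : R :=
  \sum_(I : {set 'I_(size s)} | #|I| == h) \prod_(i in I) s`_i.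

(* Main.v *)
Require Import Defs.
From HB Require Import structures.
From mathcomp Require Import all_boot all_order all_algebra all_field.
From mathcomp Require Import zify.
Import Order.TTheory GRing.Theory Num.Theory.
Local Open Scope ring_scope.
Definition Sk (k : nat) : {poly int} := \sum_(i < k) 'X^i.

Lemma CkE k m j : Ck k m j = (Sk k ^+ m)`_j.
Proof. by []. Qed.

Lemma coefSk k i : (Sk k)`_i = (i < k)%:R.
Proof.
rewrite /Sk coef_sum.
case: (ltnP i k) => hi.
  rewrite (bigD1 (Ordinal hi)) //= coefXn eqxx big1 ?addr0 // => j hj.
  rewrite coefXn; case: eqP => // e; exfalso; move/eqP: hj; apply.
  by apply: val_inj; rewrite /= -e.
rewrite big1 // => j _; rewrite coefXn; case: eqP => // e.
by move: (ltn_ord j); rewrite -e ltnNge hi.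
Qed.

Lemma Sk_poly k : Sk k = \poly_(i < k) 1.
Proof. by apply/polyP => i; rewrite coefSk coef_poly; case: (i < k)%N. Qed.

Lemma Ck0 k m j : ((k - 1) * m < j)%N -> Ck k m j = 0.
Proof.
move=> h; rewrite CkE nth_default //.
apply: leq_trans (size_poly_exp_leq _ _) _.
have hs : ((size (Sk k)).-1 <= k - 1)%N by rewrite -subn1 leq_sub2r // Sk_poly size_poly.
apply: leq_trans h; rewrite ltnS leq_mul2r hs orbT //.
Qed.

Lemma Ck_0 k m : (1 <= k)%N -> Ck k m 0 = 1.
Proof.
move=> hk; elim: m => [|m IH]; first by rewrite CkE expr0 coefC.
by rewrite CkE exprS coefM big_ord1 coefSk hk -CkE IH mulr1.
Qed.

Lemma Ck_1 k m : (2 <= k)%N -> Ck k m 1 = m%:R.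
Proof.
move=> hk; elim: m => [|m IH]; first by rewrite CkE expr0 coefC.
rewrite CkE exprS coefM big_ord_recr big_ord1 /= !coefSk -!CkE IH Ck_0; last by lia.
have -> : (0 < k)%N by lia. have -> : (1 < k)%N by lia.
by rewrite !mul1r -natr1 addrC.
Qed.

Lemma Ck_rec k m j : Ck k m.+1 j = \sum_(a < k | (a <= j)%N) Ck k m (j - a).
Proof.
rewrite CkE exprS coefM.
rewrite (big_ord_widen_cond (k + j.+1) (fun a => (a <= j)%N) (fun a => Ck k m (j - a))) ?leq_addr //.
rewrite (big_ord_widen (k + j.+1) (fun a => (Sk k)`_a * (Sk k ^+ m)`_(j - a))) ?leq_addl //.
rewrite big_mkcond [RHS]big_mkcond; apply: eq_bigr => a _ /=.
rewrite coefSk -CkE ltnS; case: (a <= j)%N; case: (a < k)%N => //=.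
  by rewrite mul1r. by rewrite mul0r.
Qed.

Lemma hockey m j : (\sum_(b < j.+1) 'C(m + (j - b), j - b) = 'C(m.+1 + j, j))%N.
Proof.
elim: j => [|j IH]; first by rewrite big_ord1 !bin0.
rewrite big_ord_recl /=.
under eq_bigr => b _ do rewrite /bump /= subSS.
rewrite IH subn0 [in RHS]addnS binS.
by rewrite addSn addnS.
Qed.

Lemma Ck_top k m j : (2 <= k)%N -> (j < k)%N ->
  Ck k m.+1 ((k-1) * m.+1 - j) = ('C(m + j, j))%:R.
Proof.
move=> hk; elim: m j => [|m IH] j hj.
  rewrite CkE expr1 coefSk add0n binn.
  by have -> : ((k - 1) * 1 - j < k)%N by lia.
rewrite Ck_rec big_mkcond /= (reindex_inj rev_ord_inj) /=.
have e : forall a : 'I_k, (if (k - a.+1 <= (k - 1) * m.+2 - j)%N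
   then Ck k m.+1 ((k - 1) * m.+2 - j - (k - a.+1)) else 0) =
   if (a <= j)%N then ('C(m + (j - a), j - a))%:R else 0.
  move=> a; have ha := ltn_ord a; have -> : (k - a.+1 <= (k - 1) * m.+2 - j)%N by nia.
  case: (leqP a j) => haj.
    rewrite -IH; last by lia.
    congr Ck; nia.
  rewrite Ck0 //; nia.
rewrite (eq_bigr _ (fun a _ => e a)) -big_mkcond /=.
transitivity (\sum_(a < j.+1) (('C(m + (j - a), j - a))%:R : int)).
  by rewrite (big_ord_widen k (fun a => ('C(m + (j - a), j - a))%:R : int)) //.
by rewrite -natr_sum hockey.
Qed.

Definition g k t : {poly int} :=
  \sum_(h < t) Ck k (t.-1 - h) h *: 'X^((k-1) * t.-1 - h * k).

Lemma inner_eq k n (j : nat) : (2 <= k)%N -> (j < k)%N ->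
  'X^(k-1-j) * g k (n-j) =
  \sum_(h < n | (j <= h)%N) Ck k (n.-1 - h) (h - j) *: 'X^((k-1) * n - h * k).
Proof.
move=> hk hj; rewrite /g mulr_sumr.
case: (leqP j n) => hjn; last first.
  have -> : (n - j = 0)%N by lia.
  rewrite big_ord0 big1 // => h hh; have := ltn_ord h; lia.
symmetry.
rewrite -(big_mkord (fun h => (j <= h)%N) (fun h => Ck k (n.-1 - h) (h - j) *: 'X^((k-1) * n - h * k))).
rewrite (@big_cat_nat _ _ _ j) //= [X in X + _]big_nat_cond [X in X + _]big1 ?add0r; last first.
  move=> h /andP[/andP[_ a] b]; lia.
rewrite -{1}(add0n j) big_addn big_mkord; apply: eq_big => // h.
  by rewrite leq_addl.
move=> _; have hh := ltn_ord h; rewrite addnK -scalerAr -exprD.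
have -> : (n.-1 - (h + j) = (n - j).-1 - h)%N by lia.
case: (leqP (h * k) ((k-1) * (n-j).-1)) => hc.
  congr (_ *: 'X^_); nia.
rewrite Ck0 ?scale0r //; nia.
Qed.

Lemma key k n : (2 <= k)%N -> (1 <= n)%N ->
  g k n.+1 = \sum_(j < k) 'X^(k-1-j) * g k (n-j).
Proof.
move=> hk hn.
rewrite (eq_bigr _ (fun (j : 'I_k) _ => inner_eq k n j hk (ltn_ord j))).
rewrite (exchange_big_dep xpredT) //=.
rewrite /g big_ord_recr /= subnn Ck0 ?scale0r ?addr0; last by lia.
apply: eq_bigr => h _; rewrite -scaler_suml; congr (_ *: _).
have -> : (n - h = (n.-1 - h).+1)%N by have := ltn_ord h; lia.
by rewrite Ck_rec.
Qed.

Lemma win k m : (2 <= k)%N -> size (kfib_win k m) = k /\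
  forall j, (j < k)%N -> nth 0 (kfib_win k m) j = g k (m.+1 - j).
Proof.
move=> hk; elim: m => [|m [IHs IHn]].
  split; first by rewrite /= size_nseq; lia.
  case=> [|j] hj /=.
    by rewrite /g big_ord1 /= Ck_0 ?muln0 ?mul0n ?subnn ?expr0 ?scale1r //; lia.
  have z : forall n i, nth (0 : {poly int}) (nseq n 0) i = 0.
    by elim=> [|n IH] [|i] //=.
  by rewrite z subSS sub0n /g big_ord0.
rewrite /=; split.
  rewrite /kfib_step /= size_take IHs; have -> : (k - 1 < k)%N by lia. lia.
case=> [|j] hj /=.
  rewrite subn0 key //; apply: eq_bigr => i _; by rewrite IHn.
rewrite nth_take; last by lia.
by rewrite IHn ?subSS //; lia.
Qed.

Lemma kfib_g n k : (2 <= k)%N -> (1 <= n)%N -> kfib n k = g k n.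
Proof.
move=> hk hn; rewrite /kfib; have [hs hn'] := win k n.-1 hk.
rewrite -nth0 hn'; last by lia.
by rewrite subn0 prednK.
Qed.

Lemma arith1 k n N r h : (1 < k)%N -> (r < k)%N -> ((k - 1) * (n - 1))%N = (N * k + r)%N ->
 (h < n)%N -> ~~ (h < N.+1)%N -> ((k-1) * (n.-1 - h) < h)%N.
Proof. move=> hk hr hx hh hc.
have h1 : (N.+1 * k <= h * k)%N by rewrite leq_mul2r; lia.
have h2 : ((k-1) * (n.-1 - h) + (k-1) * h = (k-1)*(n-1))%N by rewrite -mulnDr; congr (_ * _); lia.
nia. Qed.

Lemma arith2 k n N r h : (1 < k)%N -> (r < k)%N -> ((k - 1) * (n - 1))%N = (N * k + r)%N ->
 (h <= N)%N -> ((k - 1) * n.-1 - h * k = r + k * (N - h))%N.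
Proof. move=> hk hr hx hh.
have h1 : (h * k <= N * k)%N by rewrite leq_mul2r hh orbT.
rewrite -subn1 hx mulnBr; lia. Qed.

Theorem mainTheorem17 (k n : nat) (hk : (2 <= k)%N) (hn : (3 <= n)%N) :
  exists P : {poly int},
    [/\ kfib n k = 'X^(rnk n k) * (P \Po 'X^k),
        P \is monic,
        size P = (Nnk n k).+1 &
        forall xi : seq algC,
          map_poly intr P = \prod_(z <- xi) ('X - z%:P) ->
          [/\ forall h : nat, (1 <= h <= Nnk n k)%N ->
                esym_seq xi h = (-1) ^+ h * (Ck k (n - h - 1) h)%:~R,
              \sum_(z <- xi) z = - (n - 2)%:R &
              \prod_(z <- xi) z = (-1) ^+ (Nnk n k) * ('C(qnk n k + rnk n k, rnk n k))%:R]].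
Proof.
have hk0 : (0 < k)%N by lia.
have := divn_eq ((k-1)*(n-1)) k; have := ltn_pmod ((k-1)*(n-1)) hk0.
have := divn_eq (n-2) k; have := ltn_pmod (n-2) hk0.
rewrite /Nnk /rnk /qnk.
move: (((k-1)*(n-1)) %/ k)%N (((k-1)*(n-1)) %% k)%N ((n-2) %/ k)%N ((n-2) %% k)%N => N r q s hs hq hr hx.
have hN1 : (1 <= N)%N by nia.
have hNn : (N.+1 <= n - 1)%N by nia.
have hm : (n - N - 1 = q.+1)%N by nia.
have hNq : (N = (k-1) * q.+1 - r)%N by nia.
pose P : {poly int} := \poly_(i < N.+1) Ck k (n - (N - i) - 1) (N - i).
have hPc : forall i, (i <= N)%N -> P`_i = Ck k (n - (N - i) - 1) (N - i).
  by move=> i hi; rewrite coef_poly ltnS hi.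
have hsz : size P = N.+1.
  by apply: size_poly_eq; rewrite subnn subn0 Ck_0 ?oner_neq0 //; lia.
have hmon : P \is monic.
  by rewrite monicE lead_coefE hsz /= hPc // subnn subn0 Ck_0 //; lia.
exists P; split => //.
  rewrite kfib_g; try lia.
  rewrite /g comp_polyE hsz mulr_sumr.
  transitivity (\sum_(h < N.+1) Ck k (n.-1 - h) h *: 'X^((k - 1) * n.-1 - h * k)).
    rewrite [RHS](big_ord_widen n (fun h => Ck k (n.-1 - h) h *: 'X^((k - 1) * n.-1 - h * k))); last lia.
    rewrite [RHS]big_mkcond; apply: eq_bigr => h _; case: ifP => // hh.
    by rewrite Ck0 ?scale0r // (arith1 k n N r h hk hr hx (ltn_ord h) (negbT hh)).
  rewrite [RHS](reindex_inj rev_ord_inj) /=; apply: eq_bigr => h _.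
  have hh := ltn_ord h.
  rewrite subSS hPc; last lia.
  rewrite subKn; last lia.
  rewrite -scalerAr -exprM -exprD.
  have -> : (n - h - 1 = n.-1 - h)%N by lia.
  congr (_ *: 'X^_); apply: arith2 => //; lia.
move=> xi hP.
have f0 : (intr (0 : int) : algC) = 0 by [].
have hcoef : forall i, (map_poly intr P)`_i = (P`_i)%:~R :> algC.
  by move=> i; rewrite coef_map_id0.
have hsP : size (map_poly (intr : int -> algC) P) = N.+1.
  by rewrite size_map_inj_poly ?hsz //; exact: intr_inj.
have hxs : size xi = N by move: hsP; rewrite hP size_prod_XsubC => [[]].
split.
- move=> h /andP [h1 h2].
  have hle : (N - h <= size xi)%N by rewrite hxs leq_subr.
  have := coef_prod_XsubC hle.
  have e : (size xi - (N - h) = h)%N by rewrite hxs; lia.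
  rewrite e -hP hcoef hPc; last lia.
  rewrite subKn // => E.
  rewrite E signrMK /esym_seq; apply: eq_bigl => I //.
- have hne : size xi != 0%N by rewrite hxs; lia.
  have := coefPn_prod_XsubC hne.
  rewrite -hP hcoef hxs hPc; last lia.
  have -> : (N - N.-1 = 1)%N by lia.
  have -> : (n - 1 - 1 = n - 2)%N by lia.
  rewrite Ck_1 // natz /= => E.
  by rewrite -[LHS]opprK -E.
- have := coef0_prod_XsubC xi.
  rewrite -hP hcoef hPc // subn0 hm.
  have := Ck_top k q r hk hr; rewrite -hNq => ->.
  rewrite natz hxs /= => E.
  by apply: (canRL (signrMK N)); rewrite -E.
Qed.
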